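(* Let $\Omega$ be a region of $\mathcal{C}^*_{n,A}$ and $1\le k\le m$. For $\bm x\in\Omega$ with associated permutation $\pi$, let $M_k(\bm x)$ be the $n\times n$ matrix with entries $\operatorname{sgn}(x_{\pi(i)}-x_{\pi(j)}-a_k)$, $i,j\in[n]$. Then $M_k(\bm x)$ does not depend on the choice of $\bm x\in\Omega$ (even though $\pi$ may).
   Context: Let $A=\{a_1,\dots,a_m\}$ with $a_1>\dots>a_m>0$, and $\mathcal{C}^*_{n,A}$ the arrangement in $\mathbb{R}^n$ of hyperplanes $x_i-x_j=a_k$ ($i\ne j$, $1\le k\le m$); a region is a connected component of the complement of the union of its hyperplanes. For $\bm x\in\mathbb{R}^n$, the associated permutation of $\bm x$ is the unique $\pi\in\mathfrak{S}_n$ with $x_{\pi(1)}\ge x_{\pi(2)}\ge\dots\ge x_{\pi(n)}$ and such that $\pi^{-1}(i)<\pi^{-1}(j)$ whenever $i<j$ and $x_i=x_j$. Here $\operatorname{sgn}$ takes values in $\{-,0,+\}$. *)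

(* Defs.v *)
(* Points of R^n are row vectors 'rV[R]_n,
   with coordinate x_i written  x ord0 i  (i : 'I_n, indices 0..n-1). *)
From HB Require Import structures.
From mathcomp Require Import all_boot all_order all_algebra all_fingroup.
From mathcomp Require Import all_classical all_reals all_analysis.
Set Implicit Arguments. Unset Strict Implicit. Unset Printing Implicit Defensive.
Import Order.TTheory GRing.Theory Num.Theory.
Import numFieldNormedType.Exports.
Local Open Scope classical_set_scope.
Local Open Scope ring_scope.

(* A = {a_0 > a_1 > ... > a_{m-1} > 0}, given as a : 'I_m -> R *)
Definition valid_A (R : realType) (m : nat) (a : 'I_m -> R) : Prop :=
  (forall k : 'I_m, 0 < a k) /\ (forall k l : 'I_m, (k < l)%N -> a l < a k).

Definition arr_complement (R : realType) (n m : nat) (a : 'I_m -> R)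
  : set 'rV[R]_n :=
  [set x | forall (i j : 'I_n) (k : 'I_m), i != j -> x ord0 i - x ord0 j != a k].

Definition is_region (R : realType) (n m : nat) (a : 'I_m -> R)
  (Omega : set 'rV[R]_n) : Prop :=
  exists2 x0, arr_complement a x0 & Omega = connected_component (arr_complement a) x0.

Definition is_assoc_perm (R : realType) (n : nat) (x : 'rV[R]_n) (s : 'S_n) : bool :=
  [forall i : 'I_n, forall j : 'I_n, ((i < j)%N ==> (x ord0 (s j) <= x ord0 (s i)))
     && (((i < j)%N && (x ord0 i == x ord0 j)) ==> ((s^-1)%g i < (s^-1)%g j)%N)].

(* the associated permutation (unique; default 1 never used) *)
Definition assoc_perm (R : realType) (n : nat) (x : 'rV[R]_n) : 'S_n :=
  odflt 1%g [pick s : 'S_n | is_assoc_perm x s].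

Definition Mk (R : realType) (n m : nat) (a : 'I_m -> R) (k : 'I_m)
  (x : 'rV[R]_n) : 'M[int]_n :=
  let s := assoc_perm x in
  \matrix_(i, j) sgz (x ord0 (s i) - x ord0 (s j) - a k).

(* Main.v *)
Require Import Defs.
From HB Require Import structures.
From mathcomp Require Import all_boot all_order all_algebra all_fingroup.
From mathcomp Require Import all_classical all_reals all_analysis.
From mathcomp Require Import zify.
Import Order.TTheory GRing.Theory Num.Theory.
Import numFieldNormedType.Exports.
Local Open Scope ring_scope.

Lemma count_iota_lt c n : count (fun l => (l < c)%N) (iota 0 n) = minn c n.
Proof.
elim: n => [|n IH]; first by rewrite minn0.
rewrite -addn1 iotaD count_cat IH /= add0n addn0.
case: (ltnP n c) => h.
  by rewrite addn1; lia.
by rewrite addn0; lia.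
Qed.

Lemma card_lt_set n c : #|[set l : 'I_n | (l < c)%N]| = minn c n.
Proof.
rewrite cardsE cardE /enum_mem -enumT /=.
rewrite size_filter -(count_iota_lt c n) -val_enum_ord count_map.
by apply: eq_count => l.
Qed.

Section Sort.
Variables (R : realDomainType) (n : nat) (f : 'I_n -> R).

Definition prec (q p : 'I_n) := (f p < f q) || ((f q == f p) && (q < p)%N).

Lemma prec_irr p : prec p p = false.
Proof. by rewrite /prec ltxx ltnn andbF. Qed.

Lemma prec_trans r q p : prec r q -> prec q p -> prec r p.
Proof.
rewrite /prec => /orP[h1|/andP[/eqP e1 h1]] /orP[h2|/andP[/eqP e2 h2]].
- by rewrite (lt_trans h2 h1).
- by rewrite -e2 h1.
- by rewrite e1 h2.
- by rewrite e1 e2 eqxx (ltn_trans h1 h2) ltxx.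
Qed.

Lemma prec_total p q : p != q -> prec p q || prec q p.
Proof.
move=> pq; rewrite /prec.
case: (ltgtP (f p) (f q)) => h /=; rewrite ?orbT //.
by rewrite -neq_ltn.
Qed.

Definition rnk (p : 'I_n) := #|[set q | prec q p]|.

Lemma rnk_lt p : (rnk p < n)%N.
Proof.
rewrite /rnk -[X in (_ < X)%N]card_ord.
apply: proper_card; apply/properP; split; first exact: subset_predT.
by exists p => //; rewrite inE prec_irr.
Qed.

Lemma rnk_mono q p : prec q p -> (rnk q < rnk p)%N.
Proof.
move=> qp; apply: proper_card; apply/properP; split.
  by apply/fintype.subsetP => r; rewrite !inE => rq; exact: prec_trans rq qp.
by exists q; rewrite !inE ?qp ?prec_irr.
Qed.

Definition rk (p : 'I_n) : 'I_n := Ordinal (rnk_lt p).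

Lemma rk_inj : injective rk.
Proof.
move=> p q /(congr1 val) /= e; apply/eqP; apply/negPn/negP => pq.
case/orP: (prec_total _ _ pq) => /rnk_mono; by rewrite e ltnn.
Qed.

Lemma sort_exists : exists s : 'S_n,
  (forall i j : 'I_n, (i < j)%N -> f (s j) <= f (s i)) /\
  (forall i j : 'I_n, (i < j)%N -> f i == f j -> ((s^-1)%g i < (s^-1)%g j)%N).
Proof.
have K z : rk ((perm rk_inj)^-1%g z) = z by have := permKV (perm rk_inj) z; rewrite permE.
exists (perm rk_inj)^-1%g; split.
  move=> i j ij; rewrite leNgt; apply/negP => h.
  have : prec ((perm rk_inj)^-1%g j) ((perm rk_inj)^-1%g i) by rewrite /prec h.
  move/rnk_mono; rewrite -[rnk _]/(val (rk _)) -[rnk (_ i)]/(val (rk _)).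
  by rewrite !K => ji; move: (ltn_trans ij ji); rewrite ltnn.
move=> i j ij e; rewrite invgK !permE /=; apply: rnk_mono.
by rewrite /prec e ij orbT.
Qed.
End Sort.

Definition Eset n (Pr : rel 'I_n) (i j : nat) : bool :=
  [exists S : {set 'I_n}, exists T : {set 'I_n},
    [&& #|S| == i.+1, #|T| == (n - j)%N & [forall p in S, forall q in T, Pr p q]]].

Arguments Eset {n} Pr i j.
Section Char.
Variables (R : realDomainType) (n : nat) (f : 'I_n -> R) (c : R) (s : 'S_n).
Hypothesis Hs : forall i j : 'I_n, (i <= j)%N -> f (s j) <= f (s i).
Let Pf := fun p q : 'I_n => c < f p - f q.

Lemma card_compl_lt c' : #|~: [set l : 'I_n | (l < c')%N]| = (n - minn c' n)%N.
Proof. have := cardsC [set l : 'I_n | (l < c')%N]; rewrite card_lt_set card_ord; lia. Qed.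

Lemma fwd (i j : 'I_n) : (i < j)%N -> c < f (s i) - f (s j) -> Eset Pf i j.
Proof.
move=> ij h; apply/existsP; exists (s @: [set l : 'I_n | (l < i.+1)%N]).
apply/existsP; exists (s @: ~: [set l : 'I_n | (l < j)%N]).
rewrite !card_imset; try exact: perm_inj.
rewrite card_lt_set card_compl_lt.
have hi := ltn_ord i; have hj := ltn_ord j.
apply/and3P; split; first (apply/eqP; lia); first (apply/eqP; lia).
apply/forall_inP => _ /imsetP[l1 + ->]; rewrite inE => h1.
apply/forall_inP => _ /imsetP[l2 + ->]; rewrite !inE -leqNgt => h2.
rewrite /Pf; apply: (lt_le_trans h); apply: lerB.
  by apply: Hs; rewrite -ltnS.
exact: Hs.
Qed.

Lemma bwd (i j : 'I_n) : Eset Pf i j -> c < f (s i) - f (s j).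
Proof.
case/existsP => S /existsP[T] /and3P[/eqP cS /eqP cT /forall_inP H].
have hj := ltn_ord j.
have : ~~ [forall p in S, ((s^-1)%g p < i)%N].
  apply/negP => /forall_inP H1.
  have : (s^-1)%g @: S \subset [set l : 'I_n | (l < i)%N].
    by apply/fintype.subsetP => _ /imsetP[p pS ->]; rewrite inE H1.
  move/subset_leq_card; rewrite card_imset; last exact: perm_inj.
  rewrite card_lt_set cS; lia.
rewrite negb_forall_in => /exists_inP[p pS]; rewrite -leqNgt => hp.
have : ~~ [forall q in T, (j < (s^-1)%g q)%N].
  apply/negP => /forall_inP H1.
  have : (s^-1)%g @: T \subset ~: [set l : 'I_n | (l < j.+1)%N].
    by apply/fintype.subsetP => _ /imsetP[q qT ->]; rewrite !inE -leqNgt H1.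
  move/subset_leq_card; rewrite card_imset; last exact: perm_inj.
  rewrite card_compl_lt cT; lia.
rewrite negb_forall_in => /exists_inP[q qT]; rewrite -leqNgt => hq.
have := H p pS; move/forall_inP/(_ q qT); rewrite /Pf => hpq.
apply: (lt_le_trans hpq); apply: lerB.
  by have := Hs _ _ hp; rewrite permKV.
by have := Hs _ _ hq; rewrite permKV.
Qed.
End Char.

Local Open Scope classical_set_scope.

Lemma sign_const (R : realType) (n m : nat) (a : 'I_m -> R) (k : 'I_m)
  (x0 x y : 'rV[R]_n) (p q : 'I_n) :
  (@connected_component 'rV[R]_n (arr_complement a) x0) x ->
  (@connected_component 'rV[R]_n (arr_complement a) x0) y -> p != q ->
  (a k < x ord0 p - x ord0 q) = (a k < y ord0 p - y ord0 q).
Proof.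
move=> Hx Hy pq.
set D := @connected_component 'rV[R]_n (arr_complement a) x0.
set f := fun z : 'rV[R]_n => z ord0 p - z ord0 q - a k.
have cf : continuous f.
  have -> : f = (fun z : 'rV[R]_n => z ord0 p) - (fun z => z ord0 q) - (fun=> a k) by [].
  move=> z; apply: continuousB; last exact: cst_continuous.
  apply: continuousB; exact: coord_continuous.
have ci : is_interval (f @` D).
  apply/connected_intervalP/connected_continuous_connected.
    exact: component_connected.
  exact: continuous_subspaceT.
have nz : forall z, D z -> f z != 0.
  move=> z /connected_component_sub Cz; rewrite /f subr_eq0; exact: Cz.
have key : forall u v, D u -> D v -> f u < 0 -> 0 < f v -> False.
  move=> u v Du Dv fu fv.
  have [w Dw fw0] : (f @` D) 0.
    by apply: (ci (f u) (f v)); [exists u|exists v|rewrite !ltW].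
  by move: (nz w Dw); rewrite fw0 eqxx.
have ex : forall z : 'rV[R]_n, (a k < z ord0 p - z ord0 q) = (0 < f z).
  by move=> z; rewrite /f subr_gt0.
rewrite !ex.
have := nz x Hx; have := nz y Hy.
rewrite !neq_lt => /orP[fy|fy] /orP[fx|fx].
- by rewrite ltNge ltW // ltNge ltW.
- by case: (key y x Hy Hx fy fx).
- by case: (key x y Hx Hy fx fy).
- by rewrite fx fy.
Qed.

Lemma assoc_permP (R : realType) n (x : 'rV[R]_n) : is_assoc_perm x (assoc_perm x).
Proof.
rewrite /assoc_perm; case: pickP => [s //|H].
have [s [H1 H2]] := @sort_exists _ _ (fun i => x ord0 i).
move: (H s); rewrite /is_assoc_perm => /negbT/negP; case.
apply/forallP => i; apply/forallP => j; apply/andP; split; apply/implyP.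
  exact: H1.
by move/andP=> [ij e]; exact: H2.
Qed.

Lemma sorted_of (R : realType) n (x : 'rV[R]_n) s : is_assoc_perm x s ->
  forall i j : 'I_n, (i <= j)%N -> x ord0 (s j) <= x ord0 (s i).
Proof.
move=> /forallP H i j; rewrite leq_eqVlt => /orP[/eqP e|ij].
  by have -> : j = i by apply: val_inj.
by have /forallP/(_ j)/andP[/implyP h _] := H i; exact: h ij.
Qed.

Lemma entry (R : realType) n m (a : 'I_m -> R) (k : 'I_m) (x : 'rV[R]_n)
  (Cx : arr_complement a x) (ha : 0 < a k) (i j : 'I_n) :
  sgz (x ord0 (assoc_perm x i) - x ord0 (assoc_perm x j) - a k) =
  if (i < j)%N && Eset (fun p q : 'I_n => a k < x ord0 p - x ord0 q) i j
  then 1 else -1.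
Proof.
set s := assoc_perm x.
have Hs := @sorted_of R n x s (@assoc_permP R n x).
case: ltnP => ij /=.
- have ne : s i != s j.
    by apply/eqP => /perm_inj /(congr1 val) /eqP; rewrite ltn_eqF.
  have nz : x ord0 (s i) - x ord0 (s j) - a k != 0 by rewrite subr_eq0; exact: Cx.
  case: ifP => hE.
    apply: gtr0_sgz; rewrite subr_gt0.
    exact: (@bwd R n (fun p => x ord0 p) (a k) s Hs i j hE).
  apply: ltr0_sgz; rewrite lt_neqAle nz /= subr_le0 leNgt; apply/negP => h.
  by move: hE; rewrite (@fwd R n (fun p => x ord0 p) (a k) s Hs i j ij h).
- apply: ltr0_sgz; rewrite subr_lt0 (le_lt_trans _ ha) // subr_le0.
  exact: Hs.
Qed.

Theorem proposition2p3 (R : realType) (n m : nat) (a : 'I_m -> R)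
  (hA : valid_A a) (Omega : set 'rV[R]_n) (hOmega : is_region a Omega)
  (k : 'I_m) (x y : 'rV[R]_n) (hx : Omega x) (hy : Omega y) :
  Mk a k x = Mk a k y.
Proof.
case: hOmega => x0 Cx0 E0; rewrite E0 in hx hy.
have Cx := connected_component_sub hx; have Cy := connected_component_sub hy.
have ha := hA.1 k.
have HP : (fun p q : 'I_n => a k < x ord0 p - x ord0 q) =
          (fun p q : 'I_n => a k < y ord0 p - y ord0 q).
  apply: funext => p; apply: funext => q.
  case: (eqVneq p q) => [->|pq]; first by rewrite !subrr ltNge ltW.
  exact: (@sign_const R n m a k x0 x y p q hx hy pq).
apply/matrixP => i j; rewrite !mxE (@entry R n m a k x Cx ha) (@entry R n m a k y Cy ha) HP //.
Qed.
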